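(* Let $d_{w,1}$ be a Lorentz sequence space (with $p=1$), let $(f_n)$ be the unit vector basis of $\ell_1$, and let $j\colon\ell_1\to d_{w,1}$ be the formal identity. If $T\in L(\ell_1,d_{w,1})$ is such that the set $\{Tf_n:n\in\mathbb N\}$ is almost lengthwise bounded, then for every $\varepsilon>0$ there exists $S\in L(\ell_1)$ such that $\|T-jS\|<\varepsilon$.
   Context: Let $w=(w_n)$ be a real sequence with $w_1=1$, $w_n\downarrow 0$ and $\sum_n w_n=\infty$. The Lorentz sequence space $d_{w,1}$ is the Banach space of all $x=(x_n)\in c_0$ with $\|x\|=\sum_{n}w_n x^*_n<\infty$, where $x^*=(x^*_n)$ is the non-increasing rearrangement of $(|x_n|)$. The formal identity $j\colon\ell_1\to d_{w,1}$ sends the $n$-th unit vector of $\ell_1$ to the $n$-th unit vector of $d_{w,1}$. For a vector $z=(z_i)$ and $N\in\mathbb N$, $z|_{[N,\infty)}$ is the vector with coordinates $z_i$ for $i\ge N$ and $0$ otherwise. A set $A\subseteq d_{w,1}$ is almost lengthwise bounded if for every $\varepsilon>0$ there is $N$ with $\|x^*|_{[N,\infty)}\|<\varepsilon$ for all $x\in A$. *)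

(* Defs.v *)
From Stdlib Require Import Reals Lra Lia List.
From Coquelicot Require Import Coquelicot.
Open Scope R_scope.

(* Sequences are functions nat -> R, indexed from 0 (index n corresponds to
   the paper's index n+1). *)

Definition few_above (x : nat -> R) (t : R) (n : nat) : Prop :=
  forall l : list nat, NoDup l -> (forall i, In i l -> t < Rabs (x i)) ->
    (length l <= n)%nat.

(* Non-increasing rearrangement of (|x_n|) via the distribution function:
   x*_n = inf { t >= 0 : #{ i : |x_i| > t } <= n }   (0-indexed). *)
Definition dstar (x : nat -> R) (n : nat) : R :=
  real (Glb_Rbar (fun t => 0 <= t /\ few_above x t n)).

Definition in_l1 (x : nat -> R) : Prop := ex_series (fun n => Rabs (x n)).
Definition l1norm (x : nat -> R) : R := Series (fun n => Rabs (x n)).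

Definition lnorm (w : nat -> R) (x : nat -> R) : R :=
  Series (fun n => w n * dstar x n).
Definition in_dw (w : nat -> R) (x : nat -> R) : Prop :=
  is_lim_seq x 0 /\ ex_series (fun n => w n * dstar x n).

Definition lorentz_weight (w : nat -> R) : Prop :=
  w 0%nat = 1 /\ (forall n, 0 < w n) /\ (forall n, w (S n) <= w n) /\
  is_lim_seq w 0 /\ ~ ex_series w.

Definition unitv (n : nat) : nat -> R := fun i => if Nat.eqb i n then 1 else 0.

Definition trunc (N : nat) (z : nat -> R) : nat -> R :=
  fun i => if Nat.leb N i then z i else 0.

Definition linear_on (P : (nat -> R) -> Prop) (T : (nat -> R) -> (nat -> R)) : Prop :=
  (forall x y, P x -> P y -> T (fun i => x i + y i) = (fun i => T x i + T y i)) /\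
  (forall (a : R) x, P x -> T (fun i => a * x i) = (fun i => a * T x i)).

Definition bdd_l1_dw (w : nat -> R) (T : (nat -> R) -> (nat -> R)) : Prop :=
  linear_on in_l1 T /\ (forall x, in_l1 x -> in_dw w (T x)) /\
  exists C, forall x, in_l1 x -> lnorm w (T x) <= C * l1norm x.

Definition bdd_l1_l1 (S : (nat -> R) -> (nat -> R)) : Prop :=
  linear_on in_l1 S /\ (forall x, in_l1 x -> in_l1 (S x)) /\
  exists C, forall x, in_l1 x -> l1norm (S x) <= C * l1norm x.

Definition almost_lengthwise_bounded (w : nat -> R) (A : (nat -> R) -> Prop) : Prop :=
  forall eps, 0 < eps -> exists N : nat,
    forall x, A x -> lnorm w (trunc N (dstar x)) < eps.

(* Main.v *)
Require Import Defs.
From Stdlib Require Import Reals Lra Lia List Classical ClassicalEpsilon FunctionalExtensionality.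
From Coquelicot Require Import Coquelicot.
Open Scope R_scope.

Fixpoint psum (a : nat -> R) (K : nat) : R :=
  match K with O => 0 | S K' => psum a K' + a K' end.

Lemma psum_sum_n a K : sum_n a K = psum a (S K).
Proof.
  induction K. rewrite sum_O; simpl; rewrite Rplus_0_l; reflexivity.
  rewrite sum_Sn, IHK. simpl. reflexivity.
Qed.

Lemma is_series_lim a l : is_series a l <-> is_lim_seq (fun K => psum a K) l.
Proof.
  rewrite is_lim_seq_incr_1.
  split; intro H.
  - eapply is_lim_seq_ext. intro n; apply psum_sum_n. exact H.
  - assert (H' : is_lim_seq (sum_n a) l).
    { eapply is_lim_seq_ext. intro n; symmetry; apply psum_sum_n. exact H. }
    exact H'.
Qed.

Lemma psum_ext a b K : (forall k, (k < K)%nat -> a k = b k) -> psum a K = psum b K.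
Proof. induction K; intros H; simpl; auto. rewrite IHK, H; auto; intros; apply H; lia. Qed.

Lemma psum_le a b K : (forall k, (k < K)%nat -> a k <= b k) -> psum a K <= psum b K.
Proof. induction K; intros H; simpl. lra. assert (a K <= b K) by (apply H; lia).
  assert (psum a K <= psum b K) by (apply IHK; intros; apply H; lia). lra. Qed.

Lemma psum_zero K : psum (fun _ => 0) K = 0.
Proof. induction K; simpl; lra. Qed.

Lemma psum_nonneg a K : (forall k, 0 <= a k) -> 0 <= psum a K.
Proof. intros H; induction K; simpl. lra. specialize (H K); lra. Qed.

Lemma psum_mono a K L : (forall k, 0 <= a k) -> (K <= L)%nat -> psum a K <= psum a L.
Proof. intros H HKL. induction HKL. lra. simpl. specialize (H m); lra. Qed.

Lemma psum_plus a b K : psum (fun k => a k + b k) K = psum a K + psum b K.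
Proof. induction K; simpl. ring. rewrite IHK; ring. Qed.

Lemma psum_scal c a K : psum (fun k => c * a k) K = c * psum a K.
Proof. induction K; simpl. ring. rewrite IHK; ring. Qed.

Lemma psum_split a N K : psum a (N + K) = psum a N + psum (fun k => a (N + k)%nat) K.
Proof. induction K; simpl. rewrite Nat.add_0_r; ring. rewrite Nat.add_succ_r; simpl. rewrite IHK; ring. Qed.

Lemma psum_le_Series a K : ex_series a -> (forall n, 0 <= a n) -> psum a K <= Series a.
Proof.
  intros Ha Hp. pose proof (Series_correct _ Ha) as Hs. rewrite is_series_lim in Hs.
  assert (H := is_lim_seq_le_loc (fun _ => psum a K) (fun K => psum a K) (psum a K) (Series a)).
  simpl in H. apply H; auto. 2: apply is_lim_seq_const.
  exists K; intros n Hn; apply psum_mono; auto.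
Qed.

Lemma Series_le_bound a B : (forall n, 0 <= a n) -> 0 <= B -> (forall K, psum a K <= B) -> Series a <= B.
Proof.
  intros Hp HB Hb.
  assert (H := Lim_seq_le_loc (sum_n a) (fun _ => B)).
  rewrite Lim_seq_const in H.
  assert (H2 : Rbar_le (Lim_seq (sum_n a)) B).
  { apply H. exists O. intros n _. rewrite psum_sum_n. apply Hb. }
  unfold Series. destruct (Lim_seq (sum_n a)); simpl in *; lra.
Qed.

Lemma ex_series_bound a B : (forall n, 0 <= a n) -> (forall K, psum a K <= B) -> ex_series a.
Proof.
  intros Hp Hb.
  assert (Hi : forall n, sum_n a n <= sum_n a (S n)).
  { intro n. rewrite !psum_sum_n. apply psum_mono; auto. }
  pose proof (Lim_seq_correct _ (ex_lim_seq_incr _ Hi)) as Hl.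
  assert (H := Lim_seq_le_loc (sum_n a) (fun _ => B)).
  rewrite Lim_seq_const in H.
  assert (H2 : Rbar_le (Lim_seq (sum_n a)) B).
  { apply H. exists O. intros n _. rewrite psum_sum_n. apply Hb. }
  assert (H3 : Rbar_le (sum_n a 0) (Lim_seq (sum_n a))).
  { rewrite <- (Lim_seq_const (sum_n a 0)). apply Lim_seq_le_loc. exists O. intros n _.
    rewrite !psum_sum_n. apply psum_mono; auto; lia. }
  destruct (Lim_seq (sum_n a)) eqn:E; simpl in *; try tauto.
  exists r. exact Hl.
Qed.

Lemma is_series_fin a M : (forall i, (M <= i)%nat -> a i = 0) -> is_series a (psum a M).
Proof.
  intros H. rewrite is_series_lim. apply is_lim_seq_ext_loc with (fun _ => psum a M).
  2: apply is_lim_seq_const.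
  exists M. intros n Hn. replace n with (M + (n - M))%nat by lia.
  rewrite psum_split. rewrite (psum_ext (fun k => a (M+k)%nat) (fun _ => 0)). 
  - generalize (n - M)%nat. intro m. assert (psum (fun _ => 0) m = 0) by (induction m; simpl; lra). lra.
  - intros k _. apply H. lia.
Qed.

Lemma few_mono x t t' n : t <= t' -> few_above x t n -> few_above x t' n.
Proof. intros Ht H l Hl Hi. apply H; auto. intros i Hi'. specialize (Hi i Hi'). lra. Qed.

Lemma few_mono_n x t n n' : (n <= n')%nat -> few_above x t n -> few_above x t n'.
Proof. intros Hn H l Hl Hi. specialize (H l Hl Hi). lia. Qed.

Lemma dstar_nonneg x n : 0 <= dstar x n.
Proof.
  unfold dstar. destruct (Glb_Rbar_correct (fun t => 0 <= t /\ few_above x t n)) as [H1 H2].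
  assert (H3 : Rbar_le 0 (Glb_Rbar (fun t => 0 <= t /\ few_above x t n))).
  { apply H2. intros t [Ht _]. simpl. exact Ht. }
  destruct (Glb_Rbar _); simpl in *; lra.
Qed.

Lemma D3 x t n : few_above x t n -> 0 <= t -> dstar x n <= t.
Proof.
  intros Hf Ht. unfold dstar. destruct (Glb_Rbar_correct (fun t => 0 <= t /\ few_above x t n)) as [H1 H2].
  specialize (H1 t (conj Ht Hf)).
  destruct (Glb_Rbar _); simpl in *; lra.
Qed.

Lemma D1 x t n : t < dstar x n -> ~ few_above x t n.
Proof.
  intros Ht Hf. destruct (Rlt_or_le t 0) as [Hn|Hn].
  - specialize (Hf (seq 0 (S n)) (seq_NoDup _ _)). rewrite length_seq in Hf.
    assert (S n <= n)%nat. { apply Hf. intros i _. pose proof (Rabs_pos (x i)). lra. } lia.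
  - pose proof (D3 x t n Hf Hn). lra.
Qed.

Definition bounded (x : nat -> R) := exists B, forall i, Rabs (x i) <= B.

Lemma D2 x t n : bounded x -> ~ few_above x t n -> t <= dstar x n.
Proof.
  intros [B HB] Hnf.
  set (E := fun t => 0 <= t /\ few_above x t n).
  assert (HE : E (Rmax 0 B)).
  { split. apply Rmax_l. intros l Hl Hi. destruct l as [|i l]. simpl; lia.
    specialize (Hi i (or_introl eq_refl)). specialize (HB i). pose proof (Rmax_r 0 B). lra. }
  unfold dstar. fold E. destruct (Glb_Rbar_correct E) as [H1 H2].
  assert (H3 : Rbar_le 0 (Glb_Rbar E)).
  { apply H2. intros s [Hs _]. simpl. exact Hs. }
  pose proof (H1 _ HE) as H4.
  destruct (Glb_Rbar E) as [g| |] eqn:Eg; simpl in *; try tauto.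
  destruct (Rle_or_lt t g) as [Hle|Hlt]; auto.
  exfalso.
  destruct (classic (exists e, E e /\ e < t)) as [[e [[He0 He] Het]]|Hno].
  - apply Hnf. apply few_mono with e; auto. lra.
  - assert (Rbar_le t (Finite g)).
    { apply H2. intros e He. simpl. destruct (Rle_or_lt t e); auto. exfalso; apply Hno; eauto. }
    simpl in H. lra.
Qed.

Lemma dstar_nonincr x n : bounded x -> dstar x (S n) <= dstar x n.
Proof.
  intros Hb. destruct (Rle_or_lt (dstar x (S n)) (dstar x n)) as [H|H]; auto.
  set (t := (dstar x n + dstar x (S n)) / 2).
  assert (Hf : few_above x t n).
  { apply NNPP. intro Hn. pose proof (D2 x t n Hb Hn). unfold t in *. lra. }
  apply few_mono_n with (n' := S n) in Hf; [|lia].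
  pose proof (dstar_nonneg x n).
  pose proof (D3 x t (S n) Hf ltac:(unfold t; lra)). unfold t in *. lra.
Qed.

Lemma dstar_antitone x m n : bounded x -> (m <= n)%nat -> dstar x n <= dstar x m.
Proof. intros Hb H. induction H. lra. pose proof (dstar_nonincr x m0 Hb). lra. Qed.

Lemma abs_le_dstar0 x i : bounded x -> Rabs (x i) <= dstar x 0.
Proof.
  intros Hb. destruct (Rle_or_lt (Rabs (x i)) (dstar x 0)) as [H|H]; auto.
  set (t := (Rabs (x i) + dstar x 0) / 2).
  assert (t <= dstar x 0).
  { apply D2; auto. intro Hf. specialize (Hf (i :: nil) (NoDup_cons _ (in_nil (a:=i)) (NoDup_nil _))).
    assert (1 <= 0)%nat. { apply Hf. intros j [<-|[]]. unfold t; lra. } lia. }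
  unfold t in *; lra.
Qed.

Definition lsum (f : nat -> R) (l : list nat) : R := fold_right (fun i s => f i + s) 0 l.

Lemma lsum_app f l1 l2 : lsum f (l1 ++ l2) = lsum f l1 + lsum f l2.
Proof. induction l1; simpl. ring. rewrite IHl1; ring. Qed.

Lemma lsum_nonneg f l : (forall i, 0 <= f i) -> 0 <= lsum f l.
Proof. intros H; induction l; simpl. lra. specialize (H a); lra. Qed.

Lemma min_elem (f : nat -> R) l : l <> nil -> exists m, In m l /\ forall i, In i l -> f m <= f i.
Proof.
  induction l as [|a l IH]; intros Hne. congruence.
  destruct l as [|b l'].
  - exists a. split. left; auto. intros i [<-|[]]. lra.
  - destruct IH as [m [Hm Hmin]]. discriminate.
    destruct (Rle_or_lt (f a) (f m)).
    + exists a. split. left; auto. intros i [<-|Hi]. lra. specialize (Hmin i Hi). lra.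
    + exists m. split. right; auto. intros i [<-|Hi]. lra. auto.
Qed.

Lemma P_lemma y : bounded y -> forall l, NoDup l ->
  lsum (fun i => Rabs (y i)) l <= psum (dstar y) (length l).
Proof.
  intros Hb.
  assert (forall n l, length l = n -> NoDup l -> lsum (fun i => Rabs (y i)) l <= psum (dstar y) n).
  2: { intros l Hl; apply H; auto. }
  induction n; intros l Hlen Hnd.
  - destruct l; simpl in *; try lia. lra.
  - destruct (min_elem (fun i => Rabs (y i)) l) as [m [Hm Hmin]].
    { intro; subst; simpl in *; lia. }
    destruct (in_split _ _ Hm) as [l1 [l2 ->]].
    assert (Hnd' := NoDup_remove_1 _ _ _ Hnd).
    assert (Hlen' : length (l1 ++ l2) = n).
    { rewrite length_app in *; simpl in Hlen; lia. }
    specialize (IHn _ Hlen' Hnd').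
    rewrite lsum_app in *. simpl.
    assert (Rabs (y m) <= dstar y n).
    { destruct (Rle_or_lt (Rabs (y m)) (dstar y n)) as [H|H]; auto.
      set (t := (Rabs (y m) + dstar y n) / 2).
      assert (t <= dstar y n).
      { apply D2; auto. intro Hf. specialize (Hf _ Hnd).
        assert (length (l1 ++ m :: l2) <= n)%nat.
        { apply Hf. intros i Hi. specialize (Hmin i Hi). unfold t; lra. }
        lia. }
      unfold t in *; lra. }
    lra.
Qed.

Lemma build V d : 0 < d -> forall K, exists l, NoDup l /\ length l = K /\
  forall k, (k < K)%nat -> dstar V k - d < Rabs (V (nth k l 0%nat)).
Proof.
  intros Hd K. induction K.
  - exists nil. split. constructor. split. auto. intros; lia.
  - destruct IHK as [l [Hnd [Hlen Hl]]].
    set (t := dstar V K - d).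
    assert (Hnf := D1 V t K ltac:(unfold t; lra)).
    assert (HA : exists A, NoDup A /\ (forall i, In i A -> t < Rabs (V i)) /\ (K < length A)%nat).
    { apply NNPP; intro Hno. apply Hnf. intros A HA Hi.
      destruct (Compare_dec.le_lt_dec (length A) K); auto. exfalso; apply Hno; eauto. }
    destruct HA as [A [HAnd [HAi HAlen]]].
    assert (Ha : exists a, In a A /\ ~ In a l).
    { apply NNPP; intro Hno.
      assert (incl A l). { intros a Ha. apply NNPP; intro. apply Hno; eauto. }
      pose proof (NoDup_incl_length HAnd H). lia. }
    destruct Ha as [a [HaA Hal]].
    exists (l ++ a :: nil). split; [|split].
    + apply NoDup_app; auto. constructor. intros []. constructor.
      intros x Hx [<-|[]]. contradiction.
    + rewrite length_app; simpl; lia.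
    + intros k Hk. destruct (Nat.eq_dec k K).
      * subst k. rewrite <- Hlen at 2. rewrite nth_middle. apply HAi; auto.
      * rewrite app_nth1 by lia. apply Hl; lia.
Qed.

Lemma psum_shift1 a j : psum a (S j) = a 0%nat + psum (fun k => a (S k)) j.
Proof. induction j. simpl; ring. simpl in *. rewrite IHj. ring. Qed.

Lemma lsum_firstn f l j : (j <= length l)%nat ->
  lsum f (firstn j l) = psum (fun k => f (nth k l 0%nat)) j.
Proof.
  revert j. induction l as [|a l IH]; intros j Hj.
  - simpl in Hj. assert (j = 0%nat) by lia. subst. reflexivity.
  - destruct j. reflexivity.
    rewrite firstn_cons. simpl (lsum f (a :: _)). rewrite psum_shift1. simpl.
    rewrite IH. reflexivity. simpl in Hj; lia.
Qed.

Lemma lsum_nth f l : lsum f l = psum (fun k => f (nth k l 0%nat)) (length l).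
Proof. rewrite <- lsum_firstn by lia. rewrite firstn_all. reflexivity. Qed.

Lemma abel (w a b : nat -> R) d K :
  (forall k, 0 <= w k) -> (forall k, w (S k) <= w k) ->
  (forall j, (j <= K)%nat -> psum a j <= psum b j + d) -> 0 <= d ->
  psum (fun k => w k * a k) K <= psum (fun k => w k * b k) K + w 0%nat * d.
Proof.
  intros Hw0 Hw Hab Hd.
  set (c := fun k => b k - a k).
  assert (Hid : forall K, psum (fun k => w k * c k) K =
     w K * psum c K + psum (fun k => (w k - w (S k)) * psum c (S k)) K).
  { induction K0. simpl; ring. simpl. rewrite IHK0. simpl. ring. }
  assert (Htel : forall K, psum (fun k => w k - w (S k)) K = w 0%nat - w K).
  { induction K0; simpl. ring. rewrite IHK0; ring. }
  assert (HC : forall j, (j <= K)%nat -> - d <= psum c j).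
  { intros j Hj. unfold c. rewrite (psum_ext _ (fun k => b k + (-1) * a k)) by (intros; ring).
    rewrite psum_plus, psum_scal. specialize (Hab j Hj). lra. }
  assert (H1 : psum (fun k => (w k - w (S k)) * psum c (S k)) K >= psum (fun k => (w k - w (S k)) * (-d)) K).
  { apply Rle_ge, psum_le. intros k Hk. apply Rmult_le_compat_l. specialize (Hw k); lra. apply HC; lia. }
  rewrite (psum_ext (fun k => (w k - w (S k)) * - d) (fun k => (-d) * (w k - w (S k)))) in H1 by (intros; ring).
  rewrite psum_scal, Htel in H1.
  assert (H2 : w K * psum c K >= w K * (-d)).
  { apply Rle_ge, Rmult_le_compat_l; auto. }
  assert (H3 := Hid K).
  assert (H4 : psum (fun k => w k * c k) K = psum (fun k => w k * b k) K - psum (fun k => w k * a k) K).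
  { unfold c. rewrite (psum_ext _ (fun k => w k * b k + (-1) * (w k * a k))) by (intros; ring).
    rewrite psum_plus, psum_scal. ring. }
  nra.
Qed.

Lemma trunc_bounded y N : bounded y -> bounded (trunc N (dstar y)).
Proof.
  intros Hb. exists (dstar y 0). intros i. unfold trunc. destruct (Nat.leb N i).
  - rewrite Rabs_pos_eq by apply dstar_nonneg. apply dstar_antitone; auto; lia.
  - rewrite Rabs_R0. apply dstar_nonneg.
Qed.

Lemma G1 y N k : bounded y -> dstar y (N + k) <= dstar (trunc N (dstar y)) k.
Proof.
  intros Hb. set (G := trunc N (dstar y)).
  destruct (Rle_or_lt (dstar y (N + k)) (dstar G k)) as [H|H]; auto.
  set (t := (dstar y (N + k) + dstar G k) / 2).
  assert (t <= dstar G k).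
  { apply D2. apply trunc_bounded; auto. intro Hf.
    specialize (Hf (seq N (S k)) (seq_NoDup _ _)). rewrite length_seq in Hf.
    assert (S k <= k)%nat; [|lia]. apply Hf. intros i Hi. apply in_seq in Hi.
    unfold G, trunc. replace (Nat.leb N i) with true by (symmetry; apply Nat.leb_le; lia).
    rewrite Rabs_pos_eq by apply dstar_nonneg.
    assert (dstar y (N + k) <= dstar y i) by (apply dstar_antitone; auto; lia).
    unfold t; lra. }
  unfold t in *; lra.
Qed.

Lemma G2 y N k : bounded y -> dstar (trunc N (dstar y)) k <= dstar y (N + k).
Proof.
  intros Hb. set (G := trunc N (dstar y)).
  destruct (Rle_or_lt (dstar G k) (dstar y (N + k))) as [H|H]; auto.
  set (t := (dstar y (N + k) + dstar G k) / 2).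
  pose proof (dstar_nonneg y (N + k)).
  assert (Hf : few_above G t k).
  { intros l Hl Hi. rewrite <- (length_seq k N). apply NoDup_incl_length; auto.
    intros i Hil. specialize (Hi i Hil). unfold G, trunc in Hi. apply in_seq.
    destruct (Nat.leb N i) eqn:E.
    - apply Nat.leb_le in E. split; auto.
      destruct (Compare_dec.le_lt_dec (N + k) i) as [Hle|Hlt]; [|lia].
      assert (dstar y i <= dstar y (N + k)) by (apply dstar_antitone; auto).
      rewrite Rabs_pos_eq in Hi by apply dstar_nonneg. unfold t in Hi; lra.
    - rewrite Rabs_R0 in Hi. unfold t in Hi. lra. }
  pose proof (D3 G t k Hf ltac:(unfold t; lra)). unfold t in *; lra.
Qed.

Lemma c0_bounded y : is_lim_seq y 0 -> bounded y.
Proof.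
  intros Hy. apply is_lim_seq_spec in Hy. destruct (Hy (mkposreal 1 Rlt_0_1)) as [M HM].
  exists (1 + psum (fun i => Rabs (y i)) M). intro i.
  destruct (Compare_dec.le_lt_dec M i) as [Hle|Hlt].
  - specialize (HM i Hle). simpl in HM. rewrite Rminus_0_r in HM.
    pose proof (psum_nonneg (fun i => Rabs (y i)) M (fun i => Rabs_pos _)). lra.
  - assert (Rabs (y i) <= psum (fun i => Rabs (y i)) M).
    { replace M with (S i + (M - S i))%nat by lia. rewrite psum_split.
      change (psum (fun i => Rabs (y i)) (S i)) with (psum (fun i => Rabs (y i)) i + Rabs (y i)).
      pose proof (psum_nonneg (fun i => Rabs (y i)) i (fun i => Rabs_pos _)).
      pose proof (psum_nonneg (fun k => Rabs (y (S i + k)%nat)) (M - S i) (fun i => Rabs_pos _)).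
      lra. }
    lra.
Qed.

Lemma Series_nonneg' a : (forall n, 0 <= a n) -> 0 <= Series a.
Proof.
  intros Hp. assert (H := Lim_seq_le_loc (fun _ => 0) (sum_n a)).
  rewrite Lim_seq_const in H.
  assert (H2 : Rbar_le 0 (Lim_seq (sum_n a))).
  { apply H. exists O. intros n _. rewrite psum_sum_n. apply psum_nonneg; auto. }
  unfold Series. destruct (Lim_seq (sum_n a)); simpl in *; lra.
Qed.

Lemma fin_l1 x M : (forall i, (M <= i)%nat -> x i = 0) -> in_l1 x.
Proof.
  intros H. exists (psum (fun i => Rabs (x i)) M). apply is_series_fin.
  intros i Hi. rewrite H; auto. apply Rabs_R0.
Qed.

Lemma unitv_l1 n : in_l1 (unitv n) /\ l1norm (unitv n) = 1.
Proof.
  assert (H : is_series (fun i => Rabs (unitv n i)) (psum (fun i => Rabs (unitv n i)) (S n))).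
  { apply is_series_fin. intros i Hi. unfold unitv.
    replace (Nat.eqb i n) with false. apply Rabs_R0. symmetry; apply Nat.eqb_neq; lia. }
  assert (Hp : psum (fun i => Rabs (unitv n i)) (S n) = 1).
  { simpl. rewrite (psum_ext _ (fun _ => 0)).
    - unfold unitv. rewrite Nat.eqb_refl. rewrite Rabs_R1.
      rewrite psum_zero. lra.
    - intros k Hk. unfold unitv. replace (Nat.eqb k n) with false. apply Rabs_R0.
      symmetry; apply Nat.eqb_neq; lia. }
  rewrite Hp in H. split. exists 1; auto. unfold l1norm. apply is_series_unique; auto.
Qed.

Lemma l1norm_nonneg x : 0 <= l1norm x.
Proof. apply Series_nonneg'. intros; apply Rabs_pos. Qed.

Lemma lnorm_nonneg w v : (forall n, 0 <= w n) -> 0 <= lnorm w v.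
Proof. intros Hw. apply Series_nonneg'. intros n. apply Rmult_le_pos; auto. apply dstar_nonneg. Qed.

Lemma abs_le_lnorm w v i : lorentz_weight w -> in_dw w v -> Rabs (v i) <= lnorm w v.
Proof.
  intros [Hw0 [Hwp _]] [Hc Hs].
  pose proof (abs_le_dstar0 v i (c0_bounded _ Hc)).
  pose proof (psum_le_Series (fun n => w n * dstar v n) 1 Hs).
  simpl in H0. rewrite Hw0 in H0. unfold lnorm.
  assert (0 + 1 * dstar v 0 <= Series (fun n : nat => w n * dstar v n)).
  { apply H0. intros; apply Rmult_le_pos. left; auto. apply dstar_nonneg. }
  lra.
Qed.

Lemma norm_R (r : R) : norm r = Rabs r.
Proof. reflexivity. Qed.

Lemma trunc_l1 m x : in_l1 x -> in_l1 (trunc m x).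
Proof.
  intros Hx. unfold in_l1 in *. apply (@ex_series_le R_AbsRing R_CompleteNormedModule) with (b := fun n => Rabs (x n)); auto.
  intros n. rewrite norm_R, Rabs_Rabsolu. unfold trunc. destruct (Nat.leb m n).
  lra. rewrite Rabs_R0; apply Rabs_pos.
Qed.

Definition xm (m : nat) (x : nat -> R) : nat -> R := fun i => if Nat.ltb i m then x i else 0.

Lemma xm_l1 m x : in_l1 (xm m x).
Proof. apply fin_l1 with m. intros i Hi. unfold xm. replace (Nat.ltb i m) with false; auto.
  symmetry; apply Nat.ltb_ge; lia. Qed.

Lemma xm_trunc m x : x = fun i => xm m x i + trunc m x i.
Proof.
  apply functional_extensionality; intro i. unfold xm, trunc.
  destruct (Nat.ltb i m) eqn:E1; destruct (Nat.leb m i) eqn:E2.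
  - apply Nat.ltb_lt in E1; apply Nat.leb_le in E2; lia.
  - ring. - ring.
  - apply Nat.ltb_ge in E1; apply Nat.leb_gt in E2; lia.
Qed.

Lemma tail_l1norm m x : in_l1 x -> l1norm (trunc m x) = Series (fun n => Rabs (x n)) - psum (fun n => Rabs (x n)) m.
Proof.
  intros Hx.
  assert (H1 : Series (fun n => Rabs (x n)) = Series (fun n => Rabs (xm m x n) + Rabs (trunc m x n))).
  { apply Series_ext. intro n. unfold xm, trunc.
    destruct (Nat.ltb n m) eqn:E1; destruct (Nat.leb m n) eqn:E2; rewrite ?Rabs_R0; try ring.
    apply Nat.ltb_lt in E1; apply Nat.leb_le in E2; lia.
    apply Nat.ltb_ge in E1; apply Nat.leb_gt in E2; lia. }
  rewrite Series_plus in H1 by (apply xm_l1 || apply trunc_l1; auto).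
  assert (H2 : Series (fun n => Rabs (xm m x n)) = psum (fun n => Rabs (x n)) m).
  { rewrite (is_series_unique _ (psum (fun n => Rabs (xm m x n)) m)).
    - apply psum_ext. intros k Hk. unfold xm. replace (Nat.ltb k m) with true; auto.
      symmetry; apply Nat.ltb_lt; auto.
    - apply is_series_fin. intros i Hi. unfold xm. replace (Nat.ltb i m) with false. apply Rabs_R0.
      symmetry; apply Nat.ltb_ge; lia. }
  unfold l1norm. lra.
Qed.

Lemma tail_to0 x : in_l1 x -> is_lim_seq (fun m => l1norm (trunc m x)) 0.
Proof.
  intros Hx. apply is_lim_seq_ext with (fun m => Series (fun n => Rabs (x n)) - psum (fun n => Rabs (x n)) m).
  intro m; symmetry; apply tail_l1norm; auto.
  replace (Finite 0) with (Finite (Series (fun n => Rabs (x n)) - Series (fun n => Rabs (x n)))) by (f_equal; ring).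
  apply is_lim_seq_minus'. apply is_lim_seq_const.
  apply is_series_lim. apply Series_correct. exact Hx.
Qed.

Lemma T_zero T : linear_on in_l1 T -> T (fun _ => 0) = (fun _ => 0).
Proof.
  intros [_ Hh]. destruct (unitv_l1 0) as [Hu _].
  specialize (Hh 0 (unitv 0) Hu).
  replace (fun i => 0 * unitv 0 i) with (fun _ : nat => 0) in Hh by (apply functional_extensionality; intro; ring).
  rewrite Hh. apply functional_extensionality; intro; ring.
Qed.

Lemma T_xm T x m : linear_on in_l1 T ->
  forall i, T (xm m x) i = psum (fun n => x n * T (unitv n) i) m.
Proof.
  intros HL. induction m; intro i.
  - simpl. replace (xm 0 x) with (fun _ : nat => 0).
    rewrite T_zero; auto. apply functional_extensionality; intro j. reflexivity.
  - assert (E : xm (S m) x = fun j => xm m x j + (fun j => x m * unitv m j) j).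
    { apply functional_extensionality; intro j. unfold xm, unitv.
      destruct (Nat.lt_trichotomy j m) as [h|[h|h]].
      - rewrite (proj2 (Nat.ltb_lt j (S m))) by lia. rewrite (proj2 (Nat.ltb_lt j m)) by lia.
        rewrite (proj2 (Nat.eqb_neq j m)) by lia. ring.
      - subst. rewrite (proj2 (Nat.ltb_lt m (S m))) by lia. rewrite (proj2 (Nat.ltb_ge m m)) by lia.
        rewrite Nat.eqb_refl. ring.
      - rewrite (proj2 (Nat.ltb_ge j (S m))) by lia. rewrite (proj2 (Nat.ltb_ge j m)) by lia.
        rewrite (proj2 (Nat.eqb_neq j m)) by lia. ring. }
    destruct HL as [Ha Hh].
    destruct (unitv_l1 m) as [Hu _].
    assert (Hum : in_l1 (fun j => x m * unitv m j)).
    { apply fin_l1 with (S m). intros j Hj. unfold unitv. replace (Nat.eqb j m) with false. ring.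
      symmetry; apply Nat.eqb_neq; lia. }
    rewrite E, (Ha _ _ (xm_l1 m x) Hum), (Hh _ _ Hu). simpl. rewrite IHm. reflexivity.
Qed.

Lemma T_coord w T x i : lorentz_weight w -> bdd_l1_dw w T -> in_l1 x ->
  is_series (fun n => x n * T (unitv n) i) (T x i).
Proof.
  intros Hw [HL [Hdw [C HC]]] Hx.
  apply is_series_lim.
  assert (Hrel : forall m, Rabs (T x i - psum (fun n => x n * T (unitv n) i) m) <= Rabs C * l1norm (trunc m x)).
  { intro m. rewrite <- T_xm by auto.
    assert (E : T x = fun j => T (xm m x) j + T (trunc m x) j).
    { rewrite (xm_trunc m x) at 1. apply (proj1 HL); [apply xm_l1|apply trunc_l1; auto]. }
    rewrite E. replace (T (xm m x) i + T (trunc m x) i - T (xm m x) i) with (T (trunc m x) i) by ring.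
    pose proof (abs_le_lnorm w (T (trunc m x)) i Hw (Hdw _ (trunc_l1 m x Hx))).
    pose proof (HC _ (trunc_l1 m x Hx)).
    pose proof (l1norm_nonneg (trunc m x)).
    pose proof (Rle_abs C).
    assert (C * l1norm (trunc m x) <= Rabs C * l1norm (trunc m x)) by (apply Rmult_le_compat_r; auto).
    lra. }
  pose proof (tail_to0 x Hx) as Ht.
  apply is_lim_seq_le_le with (fun m => T x i - Rabs C * l1norm (trunc m x)) (fun m => T x i + Rabs C * l1norm (trunc m x)).
  - intro m. specialize (Hrel m). apply Rabs_le_between in Hrel. lra.
  - replace (Finite (T x i)) with (Finite (T x i - Rabs C * 0)) by (f_equal; ring).
    apply is_lim_seq_minus'. apply is_lim_seq_const. 
    apply (is_lim_seq_scal_l _ (Rabs C) 0) in Ht. simpl in Ht. exact Ht.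
  - replace (Finite (T x i)) with (Finite (T x i + Rabs C * 0)) by (f_equal; ring).
    apply is_lim_seq_plus'. apply is_lim_seq_const.
    apply (is_lim_seq_scal_l _ (Rabs C) 0) in Ht. simpl in Ht. exact Ht.
Qed.

Lemma psum_filter (p : nat -> bool) f I :
  psum (fun i => if p i then f i else 0) I = lsum f (filter p (seq 0 I)).
Proof.
  induction I. reflexivity.
  rewrite seq_S, filter_app, lsum_app. simpl. rewrite IHI. destruct (p I); simpl; ring.
Qed.

Lemma lsum_filter_neg (p : nat -> bool) f l :
  lsum (fun i => if p i then 0 else f i) l = lsum f (filter (fun i => negb (p i)) l).
Proof. induction l; simpl. reflexivity. rewrite IHl. destruct (p a); simpl; ring. Qed.

Lemma NoDup_firstn (l : list nat) j : NoDup l -> NoDup (firstn j l).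
Proof. intros H. rewrite <- (firstn_skipn j l) in H. eapply NoDup_app_remove_r; eauto. Qed.

Lemma ex_series_R_le (a b : nat -> R) : (forall n, Rabs (a n) <= b n) -> ex_series b -> ex_series a.
Proof. intros H Hb. apply (@ex_series_le R_AbsRing R_CompleteNormedModule) with b; auto. Qed.

Lemma ex_series_psum (f : nat -> nat -> R) I : (forall i, ex_series (f i)) ->
  ex_series (fun n => psum (fun i => f i n) I).
Proof.
  intros H. induction I; simpl.
  - exists 0. apply (is_series_fin (fun _ => 0) 0). auto.
  - apply (ex_series_plus _ _ IHI (H I)).
Qed.

Lemma Series_psum (f : nat -> nat -> R) I : (forall i, ex_series (f i)) ->
  psum (fun i => Series (f i)) I = Series (fun n => psum (fun i => f i n) I).
Proof.
  intros H. induction I; simpl.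
  - symmetry. apply is_series_unique. apply (is_series_fin (fun _ => 0) 0). auto.
  - rewrite Series_plus; auto. rewrite IHI; auto. apply ex_series_psum; auto.
Qed.

Lemma w_antitone (w : nat -> R) m n : (forall k, w (S k) <= w k) -> (m <= n)%nat -> w n <= w m.
Proof. intros H Hmn. induction Hmn. lra. specialize (H m0); lra. Qed.

Lemma le_eps a b M : 0 <= M -> (forall d, 0 < d -> a <= b + d * M) -> a <= b.
Proof.
  intros HM H. destruct (Rle_or_lt a b) as [h|h]; auto.
  specialize (H ((a - b) / (2 * (M + 1))) ltac:(apply Rdiv_lt_0_compat; lra)).
  assert ((a - b) / (2 * (M + 1)) * M < a - b).
  { unfold Rdiv. rewrite Rmult_assoc. 
    assert (M * / (2 * (M + 1)) < 1).
    { apply (Rmult_lt_reg_r (2 * (M + 1))). lra. rewrite Rmult_assoc, Rinv_l by lra. lra. }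
    rewrite (Rmult_comm (/ _) M). 
    replace (a - b) with ((a - b) * 1) at 2 by ring. apply Rmult_lt_compat_l; lra. }
  lra.
Qed.

Lemma lsum_ext f g l : (forall i, f i = g i) -> lsum f l = lsum g l.
Proof. intros H; induction l; simpl; auto. rewrite IHl, H; auto. Qed.

Definition inLb (L : list nat) (i : nat) : bool := if in_dec Nat.eq_dec i L then true else false.

Lemma tail_bound w y N L eps1 d l :
  lorentz_weight w -> in_dw w y -> NoDup L -> length L = N ->
  psum (dstar y) N - d <= lsum (fun i => Rabs (y i)) L -> 0 <= d ->
  lnorm w (trunc N (dstar y)) < eps1 -> NoDup l ->
  psum (fun k => w k * Rabs (if inLb L (nth k l 0%nat) then 0 else y (nth k l 0%nat))) (length l) <= eps1 + d.
Proof.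
  intros [Hw0 [Hwp [Hwd _]]] [Hc Hs] HLnd HLlen HLsum Hd Htail Hl.
  assert (Hb := c0_bounded _ Hc).
  set (a := fun k => Rabs (if inLb L (nth k l 0%nat) then 0 else y (nth k l 0%nat))).
  set (b := fun k => dstar y (N + k)).
  assert (Hpre : forall j, (j <= length l)%nat -> psum a j <= psum b j + d).
  { intros j Hj. unfold a.
    rewrite <- (lsum_firstn (fun i => Rabs (if inLb L i then 0 else y i))) by auto.
    rewrite (lsum_ext _ (fun i => if inLb L i then 0 else Rabs (y i)))
      by (intro i; destruct (inLb L i); auto; apply Rabs_R0).
    rewrite lsum_filter_neg.
    set (F := filter (fun i => negb (inLb L i)) (firstn j l)).
    assert (HFnd : NoDup F) by (apply NoDup_filter, NoDup_firstn; auto).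
    assert (HFL : NoDup (F ++ L)).
    { apply NoDup_app; auto. intros i Hi. unfold F in Hi. apply filter_In in Hi.
      destruct Hi as [_ Hi]. unfold inLb in Hi. destruct (in_dec Nat.eq_dec i L); simpl in Hi; auto; discriminate. }
    pose proof (P_lemma y Hb _ HFL) as HP. rewrite lsum_app, length_app in HP.
    assert (HlenF : (length F <= j)%nat).
    { unfold F. eapply Nat.le_trans. apply filter_length_le. rewrite length_firstn. lia. }
    assert (psum (dstar y) (length F + length L) <= psum (dstar y) (N + j)).
    { apply psum_mono. intros; apply dstar_nonneg. lia. }
    rewrite (psum_split _ N j) in H. fold b in H. lra. }
  pose proof (abel w a b d (length l) (fun k => Rlt_le _ _ (Hwp k)) Hwd Hpre Hd) as Habel.
  rewrite Hw0 in Habel.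
  set (G := trunc N (dstar y)).
  assert (HexG : ex_series (fun k => w k * dstar G k)).
  { apply ex_series_R_le with (fun k => w k * dstar y k); auto.
    intro k. rewrite Rabs_pos_eq by (apply Rmult_le_pos; [left; auto| apply dstar_nonneg]).
    apply Rmult_le_compat_l. left; auto.
    eapply Rle_trans. apply G2; auto. apply dstar_antitone; auto; lia. }
  assert (psum (fun k => w k * b k) (length l) <= psum (fun k => w k * dstar G k) (length l)).
  { apply psum_le. intros k _. apply Rmult_le_compat_l. left; auto. apply G1; auto. }
  assert (psum (fun k => w k * dstar G k) (length l) <= Series (fun k => w k * dstar G k)).
  { apply psum_le_Series; auto. intros; apply Rmult_le_pos; [left; auto| apply dstar_nonneg]. }
  unfold lnorm in Htail. fold G in Htail. unfold a in Habel. lra.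
Qed.

Lemma ex_series_R_ext (a b : nat -> R) : (forall n, a n = b n) -> ex_series a -> ex_series b.
Proof. intros H Ha. exact (@ex_series_ext R_AbsRing R_NormedModule a b H Ha). Qed.

Lemma is_series_R_ext (a b : nat -> R) l : (forall n, a n = b n) -> is_series a l -> is_series b l.
Proof. intros H Ha. exact (@is_series_ext R_AbsRing R_NormedModule a b l H Ha). Qed.

Lemma psum_const c N : psum (fun _ => c) N = INR N * c.
Proof. induction N; simpl psum. simpl; ring. rewrite IHN, S_INR; ring. Qed.

Theorem theorem6p5 (w : nat -> R) (T : (nat -> R) -> (nat -> R)) :
  lorentz_weight w ->
  bdd_l1_dw w T ->
  almost_lengthwise_bounded w (fun y => exists n : nat, y = T (unitv n)) ->
  forall eps, 0 < eps ->
    exists S : (nat -> R) -> (nat -> R),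
      bdd_l1_l1 S /\
      exists c, c < eps /\
        forall x, in_l1 x -> lnorm w (fun i => T x i - S x i) <= c * l1norm x.
Proof.
  intros Hw HT Hab eps Heps.
  pose proof Hw as [Hw0 [Hwp [Hwd _]]].
  pose proof HT as [HL [Hdw [C HC]]].
  set (y := fun n => T (unitv n)).
  assert (Hydw : forall n, in_dw w (y n)) by (intro n; apply Hdw; apply (proj1 (unitv_l1 n))).
  assert (HyC : forall n, lnorm w (y n) <= C).
  { intro n. destruct (unitv_l1 n) as [Hu Hn]. specialize (HC _ Hu). rewrite Hn in HC. unfold y. lra. }
  assert (HC0 : 0 <= C).
  { pose proof (lnorm_nonneg w (y 0%nat) (fun k => Rlt_le _ _ (Hwp k))). specialize (HyC 0%nat); lra. }
  assert (Hyi : forall n i, Rabs (y n i) <= C).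
  { intros. apply Rle_trans with (lnorm w (y n)); [apply abs_le_lnorm; auto|apply HyC]. }
  destruct (Hab (eps/3) ltac:(lra)) as [N HN].
  assert (HN' : forall n, lnorm w (trunc N (dstar (y n))) < eps/3).
  { intro n. apply HN. exists n. reflexivity. }
  assert (HLex : forall n, exists L, NoDup L /\ length L = N /\
      psum (dstar (y n)) N - eps/3 <= lsum (fun i => Rabs (y n i)) L).
  { intro n. pose proof (pos_INR N) as HNp.
    set (dl := eps/3/(INR N + 1)).
    assert (Hdl : 0 < dl) by (unfold dl; apply Rdiv_lt_0_compat; lra).
    destruct (build (y n) dl Hdl N) as [L [Hnd [Hlen Hk]]].
    exists L. split; auto. split; auto.
    rewrite lsum_nth, Hlen.
    assert (psum (fun k => dstar (y n) k + (-1) * dl) N <= psum (fun k => Rabs (y n (nth k L 0%nat))) N).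
    { apply psum_le. intros k Hk'. specialize (Hk k Hk'). lra. }
    rewrite psum_plus, psum_const in H.
    assert (INR N * dl <= eps / 3).
    { unfold dl. unfold Rdiv. rewrite <- Rmult_assoc. rewrite (Rmult_comm (INR N)).
      rewrite Rmult_assoc. replace (eps * / 3) with (eps * / 3 * 1) at 2 by ring.
      apply Rmult_le_compat_l. lra.
      apply (Rmult_le_reg_r (INR N + 1)). lra. rewrite Rmult_assoc, Rinv_l by lra. lra. }
    lra. }
  set (Lf := fun n => proj1_sig (constructive_indefinite_description _ (HLex n))).
  assert (HLf : forall n, NoDup (Lf n) /\ length (Lf n) = N /\
      psum (dstar (y n)) N - eps/3 <= lsum (fun i => Rabs (y n i)) (Lf n)).
  { intro n. exact (proj2_sig (constructive_indefinite_description _ (HLex n))). }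
  clearbody Lf.
  set (z := fun n i => if inLb (Lf n) i then y n i else 0).
  set (u := fun n i => if inLb (Lf n) i then 0 else y n i).
  set (B1 := C / w N).
  assert (HB1 : 0 <= B1) by (unfold B1; apply Rmult_le_pos; auto; left; apply Rinv_0_lt_compat; auto).
  assert (HzC : forall n i, Rabs (z n i) <= C).
  { intros. unfold z. destruct (inLb _ _). auto. rewrite Rabs_R0; auto. }
  assert (HuC : forall n i, Rabs (u n i) <= C).
  { intros. unfold u. destruct (inLb _ _). rewrite Rabs_R0; auto. auto. }
  assert (Hz1 : forall n I, psum (fun i => Rabs (z n i)) I <= B1).
  { intros n I. destruct (HLf n) as [Hnd [Hlen _]].
    rewrite (psum_ext _ (fun i => if inLb (Lf n) i then Rabs (y n i) else 0))
      by (intros; unfold z; destruct (inLb _ _); auto; apply Rabs_R0).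
    rewrite psum_filter.
    assert (Hb := c0_bounded _ (proj1 (Hydw n))).
    eapply Rle_trans. apply P_lemma; auto. apply NoDup_filter, seq_NoDup.
    assert (Hlf : (length (filter (inLb (Lf n)) (seq 0 I)) <= N)%nat).
    { rewrite <- Hlen. apply NoDup_incl_length. apply NoDup_filter, seq_NoDup.
      intros i Hi. apply filter_In in Hi. destruct Hi as [_ Hi]. unfold inLb in Hi.
      destruct (in_dec Nat.eq_dec i (Lf n)); auto; discriminate. }
    eapply Rle_trans. apply psum_mono. intros; apply dstar_nonneg. exact Hlf.
    assert (w N * psum (dstar (y n)) N <= C).
    { rewrite <- psum_scal. eapply Rle_trans. 2: apply (HyC n).
      eapply Rle_trans. 2: apply psum_le_Series. 2: apply (proj2 (Hydw n)).
      2: intros; apply Rmult_le_pos; [left; auto| apply dstar_nonneg].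
      apply psum_le. intros k Hk. apply Rmult_le_compat_r. apply dstar_nonneg.
      apply w_antitone; auto; lia. }
    unfold B1. pose proof (Hwp N).
    replace (psum (dstar (y n)) N) with ((w N * psum (dstar (y n)) N) * / w N) by (field; lra).
    apply Rmult_le_compat_r; auto. left; apply Rinv_0_lt_compat; auto. }
  assert (Hexz : forall x, in_l1 x -> forall i, ex_series (fun n => Rabs (x n) * Rabs (z n i))).
  { intros x Hx i. apply ex_series_R_le with (fun n => Rabs (x n) * C).
    - intro n. rewrite Rabs_pos_eq by (apply Rmult_le_pos; apply Rabs_pos).
      apply Rmult_le_compat_l. apply Rabs_pos. auto.
    - apply ex_series_scal_r. exact Hx. }
  assert (Hexz' : forall x, in_l1 x -> forall i, ex_series (fun n => x n * z n i)).
  { intros x Hx i. apply ex_series_R_le with (fun n => Rabs (x n) * Rabs (z n i)).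
    - intro n. rewrite Rabs_mult. lra.
    - auto. }
  assert (Hexu : forall x, in_l1 x -> forall i, ex_series (fun n => Rabs (x n) * Rabs (u n i))).
  { intros x Hx i. apply ex_series_R_le with (fun n => Rabs (x n) * C).
    - intro n. rewrite Rabs_pos_eq by (apply Rmult_le_pos; apply Rabs_pos).
      apply Rmult_le_compat_l. apply Rabs_pos. auto.
    - apply ex_series_scal_r. exact Hx. }
  set (S := fun (x : nat -> R) i => Series (fun n => x n * z n i)).
  assert (HSp : forall x, in_l1 x -> forall I, psum (fun i => Rabs (S x i)) I <= B1 * l1norm x).
  { intros x Hx I.
    apply Rle_trans with (psum (fun i => Series (fun n => Rabs (x n) * Rabs (z n i))) I).
    { apply psum_le. intros i _. unfold S.
      eapply Rle_trans. apply Series_Rabs.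
      - apply ex_series_R_ext with (fun n => Rabs (x n) * Rabs (z n i)). intro; rewrite Rabs_mult; auto. auto.
      - right. apply Series_ext. intro; apply Rabs_mult. }
    rewrite Series_psum by auto.
    apply Rle_trans with (Series (fun n => B1 * Rabs (x n))).
    { apply Series_le.
      - intro n. rewrite psum_scal. split.
        + apply Rmult_le_pos. apply Rabs_pos. apply psum_nonneg. intros; apply Rabs_pos.
        + rewrite Rmult_comm. apply Rmult_le_compat_r. apply Rabs_pos. apply Hz1.
      - apply ex_series_R_ext with (fun n => Rabs (x n) * B1). intro; ring. apply ex_series_scal_r; auto. }
    rewrite Series_scal_l. unfold l1norm. lra. }
  exists S. split.
  { split; [split|split].
    - intros x1 x2 H1 H2. apply functional_extensionality; intro i. unfold S.
      rewrite <- Series_plus by auto. apply Series_ext; intro; ring.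
    - intros a x Hx. apply functional_extensionality; intro i. unfold S.
      rewrite <- Series_scal_l. apply Series_ext; intro; ring.
    - intros x Hx. apply ex_series_bound with (B1 * l1norm x). intros; apply Rabs_pos. auto.
    - exists B1. intros x Hx. apply Series_le_bound. intros; apply Rabs_pos.
      apply Rmult_le_pos; auto; apply l1norm_nonneg. auto. }
  exists (2 * eps / 3). split. lra.
  intros x Hx.
  set (V := fun i => T x i - S x i).
  assert (HV : forall i, Rabs (V i) <= Series (fun n => Rabs (x n) * Rabs (u n i))).
  { intro i.
    assert (HVs : is_series (fun n => x n * u n i) (V i)).
    { pose proof (T_coord w T x i Hw HT Hx) as H1.
      pose proof (Series_correct _ (Hexz' x Hx i)) as H2.
      pose proof (is_series_minus _ _ _ _ H1 H2) as H3.
      apply is_series_R_ext with (fun n => x n * T (unitv n) i - x n * z n i).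
      - intro n. unfold u, z, y. destruct (inLb _ _); ring.
      - exact H3. }
    rewrite <- (is_series_unique _ _ HVs).
    eapply Rle_trans. apply Series_Rabs.
    - apply ex_series_R_ext with (fun n => Rabs (x n) * Rabs (u n i)). intro; rewrite Rabs_mult; auto. auto.
    - right. apply Series_ext. intro; apply Rabs_mult. }
  apply Series_le_bound.
  { intro; apply Rmult_le_pos. left; auto. apply dstar_nonneg. }
  { apply Rmult_le_pos. lra. apply l1norm_nonneg. }
  intro K.
  apply le_eps with (psum w K). apply psum_nonneg; intros; left; auto.
  intros d Hd.
  destruct (build V d Hd K) as [l [Hnd [Hlen Hk]]].
  apply Rle_trans with (psum (fun k => w k * Rabs (V (nth k l 0%nat)) + d * w k) K).
  { apply psum_le. intros k Hk'. specialize (Hk k Hk'). pose proof (Hwp k). nra. }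
  rewrite psum_plus, psum_scal.
  cut (psum (fun k => w k * Rabs (V (nth k l 0%nat))) K <= 2 * eps / 3 * l1norm x). lra.
  apply Rle_trans with (psum (fun k => Series (fun n => w k * (Rabs (x n) * Rabs (u n (nth k l 0%nat))))) K).
  { apply psum_le. intros k _. rewrite Series_scal_l. apply Rmult_le_compat_l. left; auto. apply HV. }
  rewrite Series_psum.
  2: { intro k. apply ex_series_R_le with (fun n => Rabs (x n) * (w k * C)).
       - intro n. rewrite Rabs_pos_eq by (apply Rmult_le_pos; [left; auto| apply Rmult_le_pos; apply Rabs_pos]).
         replace (w k * (Rabs (x n) * Rabs (u n (nth k l 0%nat)))) with ((Rabs (x n) * w k) * Rabs (u n (nth k l 0%nat))) by ring.
         replace (Rabs (x n) * (w k * C)) with ((Rabs (x n) * w k) * C) by ring.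
         apply Rmult_le_compat_l. apply Rmult_le_pos. apply Rabs_pos. left; auto. apply HuC.
       - apply ex_series_scal_r; auto. }
  apply Rle_trans with (Series (fun n => (2 * eps / 3) * Rabs (x n))).
  2: { rewrite Series_scal_l. unfold l1norm. lra. }
  apply Series_le.
  2: { apply ex_series_R_ext with (fun n => Rabs (x n) * (2 * eps / 3)). intro; ring. apply ex_series_scal_r; auto. }
  intro n. split.
  { apply psum_nonneg. intro k. apply Rmult_le_pos. left; auto. apply Rmult_le_pos; apply Rabs_pos. }
  rewrite (psum_ext _ (fun k => Rabs (x n) * (w k * Rabs (u n (nth k l 0%nat))))) by (intros; ring).
  rewrite psum_scal. rewrite Rmult_comm. apply Rmult_le_compat_r. apply Rabs_pos.
  destruct (HLf n) as [HLnd [HLlen HLsum]].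
  pose proof (tail_bound w (y n) N (Lf n) (eps/3) (eps/3) l Hw (Hydw n) HLnd HLlen HLsum
     ltac:(lra) (HN' n) Hnd) as Htb.
  rewrite Hlen in Htb. unfold u. lra.
Qed.
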